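(* Let $\tilde{\mathfrak{g}}$ be a real solvable Lie algebra with an Einstein metric $\langle,\rangle$, $\widetilde{\operatorname{Ric}}=\lambda\,\mathrm{id}$ with $\lambda\neq0$, admitting a pseudo-Iwasawa decomposition $\tilde{\mathfrak g}=\mathfrak{g}\oplus^\perp\mathfrak{a}$. Then $\mathfrak{g}$ is the nilradical of $\tilde{\mathfrak{g}}$.
   Context: A metric on a Lie algebra is a nondegenerate symmetric bilinear form, possibly indefinite; the Ricci operator is that of the corresponding left-invariant pseudo-Riemannian metric on the simply connected Lie group. A pseudo-Iwasawa decomposition of a metric Lie algebra $\tilde{\mathfrak g}$ is an orthogonal direct sum of vector spaces $\tilde{\mathfrak{g}}=\mathfrak{g}\oplus^\perp\mathfrak{a}$ with $\mathfrak{g}$ a nilpotent ideal, $\mathfrak{a}$ an abelian subalgebra, and $\operatorname{ad}X$ self-adjoint with respect to the metric for every $X\in\mathfrak a$. *)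

(* Defs.v *)
(* finite-dimensional real Lie algebras on 'rV[R]_n,
   R : realType (the real numbers), subspaces as row spaces (mxalgebra). *)
From HB Require Import structures.
From mathcomp Require Import all_boot all_order all_algebra.
From mathcomp Require Import reals.
Set Implicit Arguments. Unset Strict Implicit. Unset Printing Implicit Defensive.
Import Order.TTheory GRing.Theory Num.Theory.
Local Open Scope ring_scope.

Section LieDefs.
Variables (R : realType) (n : nat).
Notation V := 'rV[R]_n.
Implicit Types (br : V -> V -> V) (G U : 'M[R]_n).

Definition lie_bracket br : Prop :=
  [/\ (forall (a : R) x y z, br (a *: x + y) z = a *: br x z + br y z),
      (forall (a : R) x y z, br z (a *: x + y) = a *: br z x + br z y),
      (forall x, br x x = 0) &
      (forall x y z, br x (br y z) + br y (br z x) + br z (br x y) = 0)].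

(* a metric: nondegenerate symmetric bilinear form, given by its Gram matrix
   G in the standard basis: <x, y> = x G y^T *)
Definition metric_mx G : Prop := G^T = G /\ G \in unitmx.

Definition inner G (x y : V) : R := (x *m G *m y^T) 0 0.

Definition ebase (i : 'I_n) : V := delta_mx 0 i.

(* Levi-Civita connection of the left-invariant metric (Koszul formula):
   2 <nabla_X Y, Z> = <[X,Y],Z> - <[Y,Z],X> + <[Z,X],Y> *)
Definition levi_civita br G (X Y : V) : V :=
  (2%:R^-1 : R) *:
    ((\row_k (inner G (br X Y) (ebase k) - inner G (br Y (ebase k)) X
              + inner G (br (ebase k) X) Y)) *m invmx G).

Definition curv br G (X Y Z : V) : V :=
  levi_civita br G X (levi_civita br G Y Z)
  - levi_civita br G Y (levi_civita br G X Z)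
  - levi_civita br G (br X Y) Z.

Definition ricci_form br G (Y Z : V) : R :=
  \sum_(i < n) (curv br G (ebase i) Y Z) 0 i.

(* Ricci operator: <Ric Y, Z> = ric(Y, Z) *)
Definition ricci_op br G (Y : V) : V :=
  (\row_k ricci_form br G Y (ebase k)) *m invmx G.

Definition is_subalgebra br U : Prop :=
  forall x y : V, (x <= U)%MS -> (y <= U)%MS -> (br x y <= U)%MS.

Definition is_ideal br U : Prop :=
  forall x y : V, (x <= U)%MS -> (br x y <= U)%MS.

Definition is_abelian br U : Prop :=
  forall x y : V, (x <= U)%MS -> (y <= U)%MS -> br x y = 0.

Definition is_nilpotent br U : Prop :=
  exists k : nat, forall (s : seq V) (y : V),
    size s = k -> all (fun x => (x <= U)%MS) s -> (y <= U)%MS ->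
    foldr br y s = 0.

Definition derived br U : 'M[R]_n :=
  (\sum_(i < n) \sum_(j < n) <<br (row i U) (row j U)>>)%MS.

Definition is_solvable br U : Prop :=
  exists k : nat, iter k (derived br) U = 0.

Definition is_nilradical br N : Prop :=
  [/\ is_ideal br N, is_nilpotent br N &
      forall I, is_ideal br I -> is_nilpotent br I -> (I <= N)%MS].

Definition pseudo_iwasawa br G (g a : 'M[R]_n) : Prop :=
  [/\ (g + a == 1%:M)%MS /\ (g :&: a)%MS == 0,
      (forall x y : V, (x <= g)%MS -> (y <= a)%MS -> inner G x y = 0),
      is_ideal br g /\ is_nilpotent br g,
      is_subalgebra br a /\ is_abelian br a &
      (forall X : V, (X <= a)%MS ->
         forall Y Z : V, inner G (br X Y) Z = inner G Y (br X Z))].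

End LieDefs.

(* Main.v *)
Require Import Defs.
From HB Require Import structures.
From mathcomp Require Import all_boot all_order all_algebra.
From mathcomp Require Import reals.
From mathcomp Require Import ring.
Import Order.TTheory GRing.Theory Num.Theory.
Local Open Scope ring_scope.

Lemma tr_nilp (F : fieldType) m (A : 'M[F]_m.+1) k : A ^+ k = 0 -> \tr A = 0.
Proof.
move=> Ak.
set B := map_mx polyC A.
have BX : B ^+ k = 0 by rewrite /B -rmorphXn Ak rmorph0.
set S := \sum_(i < k) ('X%:M) ^+ (k.-1 - i) * B ^+ i.
have PS : char_poly_mx A *m S = ('X ^+ k)%:M.
  change (char_poly_mx A * S = ('X ^+ k)%:M).
  rewrite /char_poly_mx -/B -subrXX_comm ?BX ?subr0.
    by rewrite rmorphXn.
  exact: (esym (comm_mx_scalar _ _)).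
have dv : char_poly A %| ('X - 0%:P) ^+ (k * m.+1).
  rewrite subr0 exprM.
  have -> : ('X ^+ k) ^+ m.+1 = char_poly A * \det S.
    by rewrite /char_poly -det_mulmx PS det_scalar.
  exact: dvdp_mulr.
have [j jle] := dvdp_exp_XsubCP dv.
rewrite subr0 eqp_monic ?char_poly_monic ?monicXn // => /eqP cpE.
have : size (char_poly A) = m.+2 by rewrite size_char_poly.
rewrite cpE size_polyXn => -[jE].
have := char_poly_trace A isT.
rewrite cpE jE coefXn /= eqn_leq ltnn andbF /= => /eqP; rewrite eq_sym oppr_eq0 => /eqP.
by []. Qed.

Lemma tr0_nilp (F : fieldType) m (A : 'M[F]_m) k : A ^+ k = 0 -> \tr A = 0.
Proof.
case: m A => [|m] A Ak; first by rewrite /mxtrace big_ord0.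
exact: tr_nilp Ak.
Qed.

Section Basics.
Variables (R : realType) (n : nat) (br : 'rV[R]_n -> 'rV[R]_n -> 'rV[R]_n)
  (G : 'M[R]_n).
Hypothesis Hbr : lie_bracket br.
Hypothesis HG : metric_mx G.
Local Notation V := 'rV[R]_n.

Lemma brL a x y z : br (a *: x + y) z = a *: br x z + br y z.
Proof. by case: Hbr => h _ _ _; apply: h. Qed.
Lemma brR a x y z : br z (a *: x + y) = a *: br z x + br z y.
Proof. by case: Hbr => _ h _ _; apply: h. Qed.
Lemma brxx x : br x x = 0. Proof. by case: Hbr => _ _ h _; apply: h. Qed.
Lemma brJ x y z : br x (br y z) + br y (br z x) + br z (br x y) = 0.
Proof. by case: Hbr => _ _ _ h; apply: h. Qed.

Lemma brDl x y z : br (x + y) z = br x z + br y z.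
Proof. by have := brL 1 x y z; rewrite !scale1r. Qed.
Lemma brDr x y z : br z (x + y) = br z x + br z y.
Proof. by have := brR 1 x y z; rewrite !scale1r. Qed.
Lemma br0l z : br 0 z = 0.
Proof. by apply: (addrI (br 0 z)); rewrite addr0 -brDl addr0. Qed.
Lemma br0r z : br z 0 = 0.
Proof. by apply: (addrI (br z 0)); rewrite addr0 -brDr addr0. Qed.
Lemma brZl a x z : br (a *: x) z = a *: br x z.
Proof. by rewrite -[a *: x]addr0 brL br0l addr0. Qed.
Lemma brZr a x z : br z (a *: x) = a *: br z x.
Proof. by rewrite -[a *: x]addr0 brR br0r addr0. Qed.
Lemma brNl x z : br (- x) z = - br x z.
Proof. by rewrite -scaleN1r brZl scaleN1r. Qed.
Lemma brNr x z : br z (- x) = - br z x.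
Proof. by rewrite -scaleN1r brZr scaleN1r. Qed.
Lemma brBl x y z : br (x - y) z = br x z - br y z.
Proof. by rewrite brDl brNl. Qed.
Lemma brBr x y z : br z (x - y) = br z x - br z y.
Proof. by rewrite brDr brNr. Qed.
Lemma brC x y : br x y = - br y x.
Proof.
have := brxx (x + y); rewrite brDl !brDr !brxx add0r addr0.
by move/eqP; rewrite addr_eq0 => /eqP.
Qed.
Lemma brJ' x y v : br x (br y v) = br (br x y) v + br y (br x v).
Proof.
have := brJ x y v; rewrite (brC v x) (brC v (br x y)) brNr.
move/eqP; rewrite -addrA addr_eq0 => /eqP ->.
by rewrite opprD !opprK addrC.
Qed.

Lemma innerL a x y z : inner G (a *: x + y) z = a * inner G x z + inner G y z.
Proof. by rewrite /inner !mulmxDl -!scalemxAl !mxE. Qed.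
Lemma innerR a x y z : inner G z (a *: x + y) = a * inner G z x + inner G z y.
Proof. by rewrite /inner linearD linearZ /= mulmxDr -scalemxAr !mxE. Qed.
Lemma inner0l z : inner G 0 z = 0.
Proof. by rewrite /inner !mul0mx mxE. Qed.
Lemma inner0r z : inner G z 0 = 0.
Proof. by rewrite /inner trmx0 mulmx0 mxE. Qed.
Lemma innerDl x y z : inner G (x + y) z = inner G x z + inner G y z.
Proof. by have := innerL 1 x y z; rewrite scale1r !mul1r. Qed.
Lemma innerDr x y z : inner G z (x + y) = inner G z x + inner G z y.
Proof. by have := innerR 1 x y z; rewrite scale1r !mul1r. Qed.
Lemma innerZl a x z : inner G (a *: x) z = a * inner G x z.
Proof. by rewrite -[a *: x]addr0 innerL inner0l addr0. Qed.
Lemma innerZr a x z : inner G z (a *: x) = a * inner G z x.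
Proof. by rewrite -[a *: x]addr0 innerR inner0r addr0. Qed.
Lemma innerNl x z : inner G (- x) z = - inner G x z.
Proof. by rewrite -scaleN1r innerZl mulN1r. Qed.
Lemma innerNr x z : inner G z (- x) = - inner G z x.
Proof. by rewrite -scaleN1r innerZr mulN1r. Qed.
Lemma innerBl x y z : inner G (x - y) z = inner G x z - inner G y z.
Proof. by rewrite innerDl innerNl. Qed.
Lemma inner_sym x y : inner G x y = inner G y x.
Proof.
rewrite /inner; have -> : x *m G *m y^T = (y *m G *m x^T)^T.
  by rewrite !trmx_mul trmxK HG.1 mulmxA.
by rewrite mxE.
Qed.
Lemma inner_e u k : inner G u (ebase R k) = (u *m G) 0 k.
Proof. by rewrite /inner /ebase trmx_delta -colE mxE. Qed.

Lemma nondeg u : (forall w, inner G u w = 0) -> u = 0.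
Proof.
move=> h; have uG : u *m G = 0.
  by apply/rowP => k; rewrite -inner_e h mxE.
by rewrite -(mulmxK HG.2 u) uG mul0mx.
Qed.

Lemma eq_by_inner u v : (forall w, inner G u w = inner G v w) -> u = v.
Proof.
move=> h; apply/eqP; rewrite -subr_eq0; apply/eqP/nondeg => w.
by rewrite innerBl h subrr.
Qed.

Lemma lin_sum_s (phi : V -> R) :
  (forall a x y, phi (a *: x + y) = a * phi x + phi y) ->
  forall w, phi w = \sum_(k < n) w 0 k * phi (ebase R k).
Proof.
move=> hl w.
have phi0 : phi 0 = 0.
  by have := hl (-1) 0 0; rewrite scaler0 addr0 mulN1r addNr.
rewrite {1}(row_sum_delta w).
elim/big_rec2: _ => [|j s1 s2 _ <-]; first exact: phi0.
by rewrite hl.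
Qed.

Lemma lin_sum_v (T : V -> V) :
  (forall a x y, T (a *: x + y) = a *: T x + T y) ->
  forall w, T w = \sum_(k < n) w 0 k *: T (ebase R k).
Proof.
move=> hl w.
have T0 : T 0 = 0.
  by have := hl (-1) 0 0; rewrite scaler0 addr0 scaleN1r addNr.
rewrite {1}(row_sum_delta w).
elim/big_rec2: _ => [|j s1 s2 _ <-]; first exact: T0.
by rewrite hl.
Qed.

Lemma inner_row_inv (phi : V -> R) :
  (forall a x y, phi (a *: x + y) = a * phi x + phi y) ->
  forall w, inner G ((\row_k phi (ebase R k)) *m invmx G) w = phi w.
Proof.
move=> hl w; rewrite (lin_sum_s _ hl w) /inner (mulmxKV HG.2) mxE.
by apply: eq_bigr => k _; rewrite !mxE mulrC.
Qed.


Lemma LC_spec X Y W : inner G (levi_civita br G X Y) W =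
  2^-1 * (inner G (br X Y) W - inner G (br Y W) X + inner G (br W X) Y).
Proof.
rewrite /levi_civita innerZl (inner_row_inv
  (fun W => inner G (br X Y) W - inner G (br Y W) X + inner G (br W X) Y)) //.
by move=> c x y /=; rewrite innerR brR innerL brL innerL; ring.
Qed.

Lemma LC_linr X c Y Y' :
  levi_civita br G X (c *: Y + Y') = c *: levi_civita br G X Y + levi_civita br G X Y'.
Proof.
apply: eq_by_inner => W; rewrite innerL !LC_spec.
by rewrite brR brL !innerL innerR; ring.
Qed.

Lemma LC0r X : levi_civita br G X 0 = 0.
Proof.
apply: nondeg => W; rewrite LC_spec br0r br0l !inner0l inner0r.
by rewrite subr0 addr0 mulr0.
Qed.

Lemma curv_lin W X c Z Z' :
  curv br G W X (c *: Z + Z') = c *: curv br G W X Z + curv br G W X Z'.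
Proof.
rewrite /curv !LC_linr.
apply/rowP => i; rewrite !mxE; ring.
Qed.

Lemma ricci_lin X c Z Z' :
  ricci_form br G X (c *: Z + Z') = c * ricci_form br G X Z + ricci_form br G X Z'.
Proof.
have eL : forall (u v : V) i, (c *: u + v) 0 i = c * u 0 i + v 0 i.
  by move=> u v i; rewrite !mxE.
rewrite /ricci_form; under eq_bigr => i _ do rewrite curv_lin eL.
by rewrite big_split /= mulr_sumr.
Qed.

Lemma ricci_inner X Z : inner G (ricci_op br G X) Z = ricci_form br G X Z.
Proof.
rewrite /ricci_op inner_row_inv //.
by move=> c x y; rewrite ricci_lin.
Qed.

Fixpoint Q (J : 'M[R]_n) (m : nat) (v : V) : Prop :=
  if m is m'.+1 then forall x, (x <= J)%MS -> Q J m' (br x v) else v = 0.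

Lemma Q_lin J m : forall c u v, Q J m u -> Q J m v -> Q J m (c *: u + v).
Proof.
elim: m => [|m IH] c u v /=; first by move=> -> ->; rewrite scaler0 addr0.
by move=> hu hv x hx; rewrite brR; apply: IH; [apply: hu | apply: hv].
Qed.

Lemma Q_ideal J (HJ : is_ideal br J) m : forall v y, Q J m v -> Q J m (br y v).
Proof.
elim: m => [|m IH] v y /=; first by move=> ->; rewrite br0r.
move=> hv x hx; rewrite brJ' -[br (br x y) v]scale1r; apply: Q_lin.
  exact: hv (HJ _ _ hx).
exact: IH (hv x hx).
Qed.

Lemma Q_nil J m : forall v,
  (forall s, size s = m -> all (fun x => (x <= J)%MS) s -> foldr br v s = 0) ->
  Q J m v.
Proof.
elim: m => [|m IH] v h /=; first exact: (h [::] erefl isT).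
move=> x hx; apply: IH => s hs hall.
rewrite -foldr_rcons; apply: h; first by rewrite size_rcons hs.
by rewrite all_rcons hx hall.
Qed.

Lemma tr_ad_nil J : is_ideal br J -> is_nilpotent br J ->
  forall y Z, (y <= J)%MS -> \sum_(i < n) (br Z (br y (ebase R i))) 0 i = 0.
Proof.
move=> HJ [k Hk] y Z hy.
pose T := fun v => br Z (br y v).
have Tlin : forall c u v, T (c *: u + v) = c *: T u + T v.
  by move=> c u v; rewrite /T !brR.
have TQ : forall m v, Q J m v -> Q J m.-1 (T v).
  case=> [|m] v /=; first by move=> ->; rewrite /T !br0r.
  by move=> hv; exact: (Q_ideal _ HJ _ _ Z (hv y hy)).
have Tall : forall v, Q J k (T v).
  move=> v; apply: (Q_ideal _ HJ); apply: Q_nil => s hs hall.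
  exact: Hk hs hall (HJ _ _ hy).
have iterT : forall j v, Q J (k - j) (iter j T (T v)).
  elim=> [|j IH] v; first by rewrite subn0 /=; apply: Tall.
  by rewrite subnS iterS; apply: TQ.
have Tnil : forall v, iter k T (T v) = 0.
  by move=> v; have := iterT k v; rewrite subnn.
pose M := \matrix_(i, j) (T (ebase R i)) 0 j.
have rowM : forall i, row i M = T (ebase R i).
  by move=> i; apply/rowP => j; rewrite !mxE.
have vM : forall v, v *m M = T v.
  move=> v; rewrite mulmx_sum_row (lin_sum_v _ Tlin v).
  by apply: eq_bigr => i _; rewrite rowM.
have vMj : forall j v, v *m M ^+ j = iter j T v.
  elim=> [|j IH] v; first by rewrite expr0 mulmx1.
  by rewrite exprS -mulmxE mulmxA vM IH iterSr.
have Mk : M ^+ k.+1 = 0.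
  apply/row_matrixP => i; rewrite row0 rowE vMj iterSr.
  exact: Tnil.
transitivity (\tr M); last exact: (tr0_nilp _ _ _ _ Mk).
by rewrite /mxtrace; apply: eq_bigr => i _; rewrite mxE.
Qed.


Lemma main_sub (lambda : R) (g a : 'M[R]_n) :
  (forall Y, ricci_op br G Y = lambda *: Y) -> lambda != 0 ->
  pseudo_iwasawa br G g a ->
  forall I, is_ideal br I -> is_nilpotent br I -> (I <= g)%MS.
Proof.
move=> Hein hl [[Hdec _] Horth [Hgid Hgnil] [_ Hab] Hsa] I HI HInil.
have decomp : forall u : V, exists ug ua,
    [/\ (ug <= g)%MS, (ua <= a)%MS & u = ug + ua].
  move=> u; have : (u <= g + a)%MS by rewrite (eqmxP Hdec) submx1.
  case/sub_addsmxP => -[u1 u2] ->; exists (u1 *m g), (u2 *m a).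
  by split; rewrite ?submxMl.
have brg : forall u v, (br u v <= g)%MS.
  move=> u v; have [ug [ua [hug hua ->]]] := decomp u.
  have [vg [va [hvg hva ->]]] := decomp v.
  rewrite brDl !brDr (Hab ua va hua hva) addr0.
  apply: addmx_sub; first by apply: addmx_sub; apply: Hgid.
  by rewrite brC eqmx_opp; apply: Hgid.
have orth_a : forall X u v, (X <= a)%MS -> inner G X (br u v) = 0.
  by move=> X u v hX; rewrite inner_sym Horth.
have LCl : forall X U, (X <= a)%MS -> levi_civita br G X U = 0.
  move=> X U hX; apply: nondeg => W; rewrite LC_spec (Hsa X hX).
  rewrite (inner_sym (br U W)) (orth_a X U W hX) (brC W X) innerNl (inner_sym (br X W)).
  by rewrite subr0 addrN mulr0.
have LCr : forall Y Z, (Z <= a)%MS -> levi_civita br G Y Z = br Y Z.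
  move=> Y Z hZ; apply: eq_by_inner => W; rewrite LC_spec (Hsa Z hZ W Y).
  rewrite (inner_sym W) (brC Z Y) innerNl (inner_sym (br W Y)) orth_a //.
  rewrite opprK addr0; set t := inner G (br Y Z) W.
  have h2 : (2 : R) != 0 by rewrite pnatr_eq0.
  by field.
have curv_aa : forall W X Z, (X <= a)%MS -> (Z <= a)%MS ->
    curv br G W X Z = - br (br W X) Z.
  move=> W X Z hX hZ.
  by rewrite /curv (LCl X Z hX) LC0r (LCl X) // LCr // subrr sub0r.
apply/row_subP => i; set x := row i I.
have hx : (x <= I)%MS := row_sub i I.
have [xg [xa [hxg hxa xE]]] := decomp x.
suff xa0 : xa = 0 by rewrite xE xa0 addr0.
have xaE : xa = x - xg by rewrite xE (addrC xg) addrK.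
apply: nondeg => w; have [wg [wa [hwg hwa ->]]] := decomp w.
rewrite innerDr (inner_sym xa wg) Horth // add0r.
have hpt : forall j, (curv br G (ebase R j) xa wa) 0 j =
    (br wa (br xg (ebase R j))) 0 j - (br wa (br x (ebase R j))) 0 j.
  move=> j; rewrite curv_aa // (brC (br _ xa) wa) opprK (brC (ebase R j) xa).
  by rewrite brNr xaE brBl brBr opprB !mxE.
have : lambda * inner G xa wa = 0.
  rewrite -innerZl -Hein ricci_inner /ricci_form.
  under eq_bigr => j _ do rewrite hpt.
  rewrite sumrB (tr_ad_nil _ Hgid Hgnil xg wa hxg) (tr_ad_nil _ HI HInil x wa hx).
  by rewrite subrr.
by move/eqP; rewrite mulf_eq0 (negPf hl) /= => /eqP.
Qed.

End Basics.

Theorem corollary3p11 (R : realType) (n : nat)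
    (br : 'rV[R]_n -> 'rV[R]_n -> 'rV[R]_n) (G : 'M[R]_n)
    (lambda : R) (g a : 'M[R]_n) :
  lie_bracket br ->
  is_solvable br 1%:M ->
  metric_mx G ->
  (forall Y : 'rV[R]_n, ricci_op br G Y = lambda *: Y) ->
  lambda != 0 ->
  pseudo_iwasawa br G g a ->
  is_nilradical br g.
Proof.
move=> Hbr _ HG Hein hl Hiw.
have [_ _ [Hgid Hgnil] _ _] := Hiw.
split => //.
exact: (main_sub _ _ _ _ Hbr HG _ _ _ Hein hl Hiw).
Qed.
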